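(* Let $\mathbf{x}$ be an infinite word over a finite alphabet and $n\ge2$ an integer with $r(n,\mathbf{x})\ge r(n-1,\mathbf{x})+2$. Then $r(n,\mathbf{x})\ge 2n+1$.
   Context: For $\mathbf{x}=x_1x_2\ldots$ and $i\le j$, $x_i^j=x_i\cdots x_j$; $r(n,\mathbf{x})=\min\{m\ge1:\ x_i^{i+n-1}=x_{m-n+1}^{m}\text{ for some } 1\le i\le m-n\}$. *)

(* Defs.v *)
From mathcomp Require Import all_boot.
Set Implicit Arguments. Unset Strict Implicit. Unset Printing Implicit Defensive.

(* An infinite word x = x_1 x_2 ... over a finite alphabet A is a function
   x : nat -> A; only the values at positions i >= 1 are used. *)

Definition rep_at (A : finType) (n : nat) (x : nat -> A) (m : nat) : bool :=
  (1 <= m) &&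
  [exists i : 'I_(m - n).+1,
     (1 <= i) && [forall k : 'I_n, x (i + k) == x (m - n + 1 + k)]].

Lemma rep_at_exists (A : finType) (n : nat) (x : nat -> A) :
  exists m, rep_at n x m.
Proof.
pose N := (#|A| ^ n).+1.
pose f := fun i : 'I_N => [tuple x (i.+1 + val k) | k < n].
have : ~~ injectiveb f.
  apply/negP => /injectiveP /leq_card.
  by rewrite card_tuple card_ord ltnn.
move/injectivePn => [i [j neqij eqf]].
wlog lt_ij : i j neqij eqf / (i < j)%N.
  move=> H; case: (ltngtP i j) => [lt|lt|eq]; first exact: (H i j).
    by apply: (H j i) => //; rewrite eq_sym.
  by move: neqij; rewrite -(inj_eq val_inj) /= eq eqxx.
exists (j + n).
apply/andP; split; first by rewrite (leq_trans _ (leq_addr _ _)) // (leq_ltn_trans _ lt_ij).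
have Hi : (i.+1 < (j + n - n).+1)%N by rewrite addnK ltnS.
apply/existsP; exists (Ordinal Hi) => /=.
apply/forallP => k.
have := congr1 (fun t : n.-tuple A => tnth t k) eqf.
rewrite !tnth_mktuple => ->.
by rewrite addnK addn1.
Qed.

Definition r (A : finType) (n : nat) (x : nat -> A) : nat :=
  ex_minn (rep_at_exists n x).

(* Main.v *)
Require Import Defs.
From mathcomp Require Import all_boot.
From mathcomp Require Import zify.

Section FW.
Variable (B : Type) (f : nat -> B).

Definition per d L := forall t, t + d < L -> f t = f (t + d).

Lemma per_mult d L : per d L -> forall k t, t + k * d < L -> f t = f (t + k * d).
Proof.
move=> P; elim=> [|k IH] t h; first by rewrite mul0n addn0.
rewrite mulSn in h *.
rewrite (IH t); last by lia.
have -> : t + (d + k * d) = t + k * d + d by lia.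
apply: P; lia.
Qed.

Lemma per_mod d L : 0 < d -> per d L ->
  forall t u, t < L -> u < L -> t = u %[mod d] -> f t = f u.
Proof.
move=> d0 P t u.
wlog tu : t u / t <= u.
  move=> W ht hu htu; case: (leqP t u) => h; first exact: W.
  symmetry; apply: W => //; try exact: ltnW; by rewrite htu.
move=> ht hu /eqP; rewrite eq_sym eqn_mod_dvd // => /dvdnP [k hk].
have -> : u = t + k * d by lia.
apply: (@per_mult d L P); lia.
Qed.

Lemma cong_shift g d e t u : g %| d -> g %| e -> t + d = u + e -> t = u %[mod g].
Proof.
move=> gd ge E.
have h1 : (t + d) %% g = t %% g by rewrite -modnDmr (eqP gd) addn0.
have h2 : (u + e) %% g = u %% g by rewrite -modnDmr (eqP ge) addn0.
by rewrite -h1 E h2.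
Qed.

Lemma fw : forall s d e L, d + e <= s -> 0 < d -> 0 < e -> per d L -> per e L ->
  d + e - gcdn d e <= L ->
  forall t u, t < L -> u < L -> t = u %[mod gcdn d e] -> f t = f u.
Proof.
elim=> [|s IH] d e L hs d0 e0 Pd Pe hL t u ht hu htu; first by lia.
wlog de : d e hs d0 e0 Pd Pe hL htu / d <= e.
  move=> W; case: (leqP d e) => h; first exact: (W d e).
  apply: (W e d) => //; try lia; rewrite gcdnC //; lia.
case: (ltngtP d e) => [lt|lt|eq]; last first.
- subst e; rewrite gcdnn in htu; exact: (@per_mod d L d0 Pd).
- lia.
have gE : gcdn d (e - d) = gcdn d e by rewrite -{2}(subnKC de) gcdnDl.
set g := gcdn d e in gE htu hL *.
have g1 : g <= e - d.
  by apply: dvdn_leq; [rewrite subn_gt0 | apply: dvdn_sub; [exact: dvdn_gcdr|exact: dvdn_gcdl]].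
have g2 : g <= d by apply: dvdn_leq => //; exact: dvdn_gcdl.
have Pe' : per (e - d) (L - d).
  move=> v hv; rewrite (Pe v); last by lia.
  rewrite (Pd (v + (e - d))); last by lia.
  by have -> : v + (e - d) + d = v + e by lia.
have Pd' : per d (L - d) by move=> v hv; apply: Pd; lia.
have IH' := IH d (e - d) (L - d) ltac:(lia) d0 ltac:(lia) Pd' Pe' ltac:(rewrite gE; lia).
rewrite gE in IH'.
have red : forall v, v < L -> exists v', [/\ v' < L - d, v' = v %[mod g] & f v' = f v].
  move=> v hv; case: (ltnP v (L - d)) => h.
    by exists v.
  exists (v - d); split; first lia.
    by apply: (@cong_shift g d 0 (v - d) v); [exact: dvdn_gcdl | exact: dvdn0 | lia].
  rewrite (Pd (v - d)); last by lia.
  by have -> : v - d + d = v by lia.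
have [t' [ht' ct ft]] := red t ht.
have [u' [hu' cu fu]] := red u hu.
rewrite -ft -fu; apply: IH' => //.
by rewrite ct htu cu.
Qed.
End FW.

Lemma rep_atI (A : finType) n (x : nat -> A) m i : 1 <= m -> 1 <= i -> i <= m - n ->
  (forall k, k < n -> x (i + k) = x (m - n + 1 + k)) -> rep_at n x m.
Proof.
move=> m1 i1 im H; apply/andP; split => //.
have Hi : i < (m - n).+1 by lia.
apply/existsP; exists (Ordinal Hi); apply/andP; split => //.
by apply/forallP => k; apply/eqP; apply: H.
Qed.

Lemma rep_atE (A : finType) n (x : nat -> A) m : rep_at n x m ->
  exists i, [/\ 1 <= m, 1 <= i, i <= m - n &
    forall k, k < n -> x (i + k) = x (m - n + 1 + k)].
Proof.
move/andP=> [m1 /existsP [[i Hi] /= /andP [i1 /forallP H]]].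
exists i; split => //.
move=> k hk; apply/eqP; exact: (H (Ordinal hk)).
Qed.

Arguments rep_atE {A n x m}.
Arguments rep_atI {A n x m i}.

Theorem lemma5p4 (A : finType) (x : nat -> A) (n : nat) :
  (2 <= n)%N -> (r (n - 1) x + 2 <= r n x)%N -> (2 * n + 1 <= r n x)%N.
Proof.
move=> n2; rewrite /r.
case: (ex_minnP (rep_at_exists n x)) => m Hm Hmin.
case: (ex_minnP (rep_at_exists (n - 1) x)) => p Hp _ hyp.
rewrite leqNgt; apply/negP => hm.
have [i [m1 i1 im Em]] := rep_atE Hm.
have [j [p1 j1 jp Ep]] := rep_atE Hp.
have [d dE] : {d | d = p - (n - 1) + 1 - j} by eexists.
have [e eE] : {e | e = m - n + 1 - i} by eexists.
have Pd : forall t, j <= t -> t + d <= p -> x t = x (t + d).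
  move=> t h1 h2; have := Ep (t - j) ltac:(lia).
  have -> : j + (t - j) = t by lia.
  by have -> : p - (n - 1) + 1 + (t - j) = t + d by lia.
have Pe : forall t, i <= t -> t + e <= m -> x t = x (t + e).
  move=> t h1 h2; have := Em (t - i) ltac:(lia).
  have -> : i + (t - i) = t by lia.
  by have -> : m - n + 1 + (t - i) = t + e by lia.
have F1 : x (p + 1) <> x (j + n - 1).
  move=> E; suff : m <= p + 1 by lia.
  apply: Hmin; apply: (rep_atI (i := j)); try lia.
  move=> k hk; case: (ltnP k (n - 1)) => hk'.
    have -> : p + 1 - n + 1 + k = j + k + d by lia.
    apply: Pd; lia.
  have -> : j + k = j + n - 1 by lia.
  by rewrite -E; congr x; lia.
have F3 : 2 <= i -> x (i - 1) <> x (m - n).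
  move=> i2 E; suff : m <= m - 1 by lia.
  apply: Hmin; apply: (rep_atI (i := i - 1)); try lia.
  move=> k hk; case: k hk => [|k] hk.
    by rewrite !addn0 E; congr x; lia.
  have -> : i - 1 + k.+1 = i + k by lia.
  have -> : m - 1 - n + 1 + k.+1 = i + k + e by lia.
  apply: Pe; lia.
have d0 : 0 < d by lia.
have e0 : 0 < e by lia.
set g := gcdn d e.
have g0 : 0 < g by rewrite gcdn_gt0 d0.
case: (leqP i j) => ij.
-
  pose L := p - j + 1.
  have FW := @fw A (fun t => x (j + t)) (d + e) d e L (leqnn _) d0 e0.
  have E1 : x (j + (n - 1 + d - e)) = x (j + (n - 1)).
    apply: FW; try lia.
    + move=> t ht; rewrite addnA; apply: Pd; lia.
    + move=> t ht; rewrite addnA; apply: Pe; lia.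
    + apply: (@cong_shift g e d); [exact: dvdn_gcdr | exact: dvdn_gcdl | lia].
  apply: F1.
  have H1 := Pe (p + 1 - e) ltac:(lia) ltac:(lia).
  rewrite (_ : p + 1 - e + e = p + 1) in H1; last by lia.
  rewrite -H1.
  have -> : j + n - 1 = j + (n - 1) by lia.
  rewrite -E1; congr x; lia.
-
  pose L := p - i + 1.
  have FW := @fw A (fun t => x (i + t)) (d + e) d e L (leqnn _) d0 e0.
  have E1 : x (i + (d - 1)) = x (i + (e - 1)).
    apply: FW; try lia.
    + move=> t ht; rewrite addnA; apply: Pd; lia.
    + move=> t ht; rewrite addnA; apply: Pe; lia.
    + apply: (@cong_shift g e d); [exact: dvdn_gcdr | exact: dvdn_gcdl | lia].
  apply: (F3 ltac:(lia)).
  rewrite (Pd (i - 1)); try lia.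
  have -> : i - 1 + d = i + (d - 1) by lia.
  rewrite E1; congr x; lia.
Qed.
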